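(* Let $R\subseteq\mathbb N$ be sparse and $A$ an operator on $R$. If $A>_R0$ then there is $r\in\mathbb Q_{>1}$ such that $A(\sigma z)>r\,Az$ for all but finitely many $z\in R$; if $A<_R0$ then there is $r\in\mathbb Q_{>1}$ such that $A(\sigma z)<r\,Az$ for all but finitely many $z\in R$. In particular, if $A>_R0$ (resp. $A<_R0$) the map $z\mapsto Az$ on $R$ is eventually strictly increasing (resp. strictly decreasing).
   Context: Let $R\subseteq\mathbb N$ be infinite, enumerated increasingly as $(r_n)_{n\in\mathbb N}$; $\sigma:R\to R$ is the successor map $\sigma(r_n)=r_{n+1}$ and $\sigma^k$ its $k$-fold iterate ($\sigma^0=\mathrm{id}$). An operator on $R$ is a function $R\to\mathbb Z$, $z\mapsto a_m\sigma^m(z)+\dots+a_0\sigma^0(z)$ with $a_i\in\mathbb Z$. For an operator $A$: $A=_R0$ if $Az=0$ for all $z\in R$; $A>_R0$ (resp. $A<_R0$) if $Az>0$ (resp. $Az<0$) for all but finitely many $z\in R$. $R$ is sparse if every operator $A$ satisfies (S1) $A=_R0$ or $A>_R0$ or $A<_R0$; and (S2) if $A>_R0$ then there is $\Delta\in\mathbb N$ with $A(\sigma^\Delta z)>z$ for all $z\in R$. *)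

(* Defs.v *)
From mathcomp Require Import all_boot all_order all_algebra.
Set Implicit Arguments. Unset Strict Implicit. Unset Printing Implicit Defensive.
Import Order.TTheory GRing.Theory Num.Theory.
Local Open Scope ring_scope.

(* An infinite set R ⊆ ℕ is represented by its increasing enumeration
   r : nat -> nat (r n = r_n, strictly increasing); R = range r.
   The successor map is σ(r_n) = r_(n+1), so σ^k(r_n) = r_(n+k).
   An operator z ↦ a_m σ^m(z) + ... + a_0 σ^0(z) is represented by the
   coefficient list a = [:: a_0; a_1; ...; a_m] : seq int.
   op_val r a n is the value A z at z = r_n. *)

Definition strictly_incr (r : nat -> nat) : Prop := forall n, (r n < r n.+1)%N.

Definition op_val (r : nat -> nat) (a : seq int) (n : nat) : int :=
  \sum_(i < size a) a`_i * ((r (n + i)%N)%:Z).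

Definition op_zero (r : nat -> nat) (a : seq int) : Prop :=
  forall n, op_val r a n = 0.

Definition op_pos (r : nat -> nat) (a : seq int) : Prop :=
  exists N, forall n, (N <= n)%N -> 0 < op_val r a n.

Definition op_neg (r : nat -> nat) (a : seq int) : Prop :=
  exists N, forall n, (N <= n)%N -> op_val r a n < 0.

Definition sparse (r : nat -> nat) : Prop :=
  forall a : seq int,
    (op_zero r a \/ op_pos r a \/ op_neg r a) /\
    (op_pos r a -> exists D : nat, forall n, (r n)%:Z < op_val r a (n + D)%N).

(* Main.v *)
Require Import Defs.
From mathcomp Require Import all_boot all_order all_algebra.
From mathcomp Require Import zify ring lra.
Import Order.TTheory GRing.Theory Num.Theory.
Local Open Scope ring_scope.

Lemma op_val_ext r a n K : (size a <= K)%N ->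
  op_val r a n = \sum_(i < K) a`_i * (r (n + i)%N)%:Z.
Proof.
move=> hK; rewrite /op_val (big_ord_widen K (fun i => a`_i * (r (n + i)%N)%:Z) hK).
rewrite big_mkcond; apply: eq_bigr => i _; case: ifP => // /negbT.
by rewrite -leqNgt => h; rewrite nth_default // mul0r.
Qed.

Definition lc (c d : int) (s t : seq int) :=
  mkseq (fun i => c * s`_i + d * t`_i) (maxn (size s) (size t)).

Lemma op_val_lc r c d s t n :
  op_val r (lc c d s t) n = c * op_val r s n + d * op_val r t n.
Proof.
rewrite {1}/op_val size_mkseq (op_val_ext r s n _ (leq_maxl (size s) (size t))).
rewrite (op_val_ext r t n _ (leq_maxr (size s) (size t))) !mulr_sumr -big_split /=.
apply: eq_bigr => i _; rewrite nth_mkseq //; ring.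
Qed.

Lemma op_val_sh r a n : op_val r (0 :: a) n = op_val r a n.+1.
Proof.
rewrite /op_val /= big_ord_recl /= mul0r add0r; apply: eq_bigr => i _.
by rewrite /bump /= addnS.
Qed.

Lemma op_val_nil r n : op_val r [::] n = 0.
Proof. by rewrite /op_val big_ord0. Qed.

Lemma r_mono r : strictly_incr r -> forall i j, (i <= j)%N -> (r i <= r j)%N.
Proof.
move=> hr; apply: (@homo_leq nat r (fun x y => (x <= y)%N)) => //.
  by move=> ??? ; exact: leq_trans.
by move=> i; exact: ltnW.
Qed.

Lemma r_ge r : strictly_incr r -> forall n, (n <= r n)%N.
Proof. move=> hr; elim=> // n IH; exact: leq_ltn_trans IH (hr n). Qed.

Lemma op_bound r a : strictly_incr r -> exists M : int, 0 < M /\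
  forall n, op_val r a n <= M * (r (n + size a)%N)%:Z.
Proof.
move=> hr; exists (1 + \sum_(i < size a) `|a`_i|); split.
  by rewrite ltr_pwDl // sumr_ge0.
move=> n; rewrite mulrDl mul1r; apply: ler_wpDl => //.
rewrite mulr_suml /op_val; apply: ler_sum => i _.
apply: (le_trans (ler_wpM2r _ (ler_norm _))) => //.
apply: ler_wpM2l => //; rewrite lez_nat; apply: r_mono => //.
by rewrite leq_add2l ltnW.
Qed.
Lemma pos_case r a : strictly_incr r -> sparse r -> op_pos r a ->
  exists k : int, 0 < k /\ exists N, forall n, (N <= n)%N ->
    0 < op_val r a n /\ (k + 1) * op_val r a n < k * op_val r a n.+1.
Proof.
move=> hr hs [N0 hN0].
have [D hD] : exists D, forall n, (r n)%:Z <
    op_val r a (n + D)%N.+1 - op_val r a (n + D)%N.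
  case: (hs (lc 1 (-1) (0 :: a) a)) => [[Hz|[Hp|Hn]] S2].
  - exfalso.
    have hc : forall n, op_val r a n = op_val r a 0.
      elim => // n IH; have := Hz n; rewrite op_val_lc op_val_sh; lia.
    case: (hs a) => _ /(_ (ex_intro _ N0 hN0)) [D' hD'].
    have := hD' (absz (op_val r a 0)); rewrite hc.
    have := r_ge r hr (absz (op_val r a 0)); lia.
  - case: (S2 Hp) => D hD; exists D => n; have := hD n.
    rewrite op_val_lc op_val_sh; lia.
  - exfalso; case: Hn => N1 hN1.
    pose n0 := maxn N0 N1.
    have dec : forall j, op_val r a (n0 + j)%N <= op_val r a n0 - j%:Z.
      elim => [|j IH]; first by rewrite addn0 subr0.
      have := hN1 (n0 + j)%N; rewrite op_val_lc op_val_sh addnS.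
      have : (N1 <= n0 + j)%N by rewrite /n0; lia.
      move=> hh /(_ hh); lia.
    have := dec (absz (op_val r a n0)); have := hN0 (n0 + absz (op_val r a n0))%N.
    have : (N0 <= n0 + absz (op_val r a n0))%N by rewrite /n0; lia.
    move=> hh /(_ hh); lia.
have [M [M0 hM]] := op_bound r a hr.
pose m := size a; pose L := (m + D)%N.
pose k : int := M * 2 ^+ L.
have k0 : 0 < k by rewrite /k mulr_gt0 // exprn_gt0.
case: (hs (lc k (-(k+1)) (0 :: a) a)) => [[Hz|[Hp|Hn]] _].
- exists (2 * k); split; first by rewrite mulr_gt0.
  exists N0 => n hn; have := hN0 n hn; have := Hz n.
  rewrite op_val_lc op_val_sh => h1 h2; split => //; lia.
- exists k; split => //; case: Hp => N2 hN2; exists (maxn N0 N2) => n hn.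
  have := hN2 n; have := hN0 n.
  have : (N0 <= n)%N by lia.
  have : (N2 <= n)%N by lia.
  move=> h1 h2 /(_ h2) h3 /(_ h1); rewrite op_val_lc op_val_sh => h4; split => //; lia.
- exfalso; case: Hn => N2 hN2; pose j := maxn N0 N2.
  have hN2' : forall n, (j <= n)%N ->
      k * op_val r a n.+1 < (k + 1) * op_val r a n.
    move=> n hn; have := hN2 n; rewrite op_val_lc op_val_sh.
    have : (N2 <= n)%N by rewrite /j in hn; lia.
    move=> hh /(_ hh); lia.
  have step : forall t, k ^+ t * op_val r a (j + t)%N <= (k + 1) ^+ t * op_val r a j.
    elim => [|t IH]; first by rewrite !expr0 !mul1r addn0.
    rewrite addnS !exprS.
    have h := hN2' (j + t)%N (leq_addr _ _).
    apply: (le_trans (y := k ^+ t * ((k + 1) * op_val r a (j + t)%N))).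
      rewrite -mulrA mulrCA; apply: ler_wpM2l; first by rewrite exprn_ge0 // ltW.
      exact: ltW.
    rewrite mulrCA -mulrA; apply: ler_wpM2l; first by rewrite addr_ge0 // ltW.
    exact: IH.
  pose R : int := (r (j + m)%N)%:Z.
  have R0 : 0 <= R by [].
  have h2 := hD (j + m)%N.
  have h3 := hN2' (j + m + D)%N (leq_trans (leq_addr m j) (leq_addr _ _)).
  have h23 : k * R < op_val r a (j + L)%N.
    rewrite /L addnA.
    apply: (lt_trans (y := k * (op_val r a (j + m + D)%N.+1 - op_val r a (j + m + D)%N))).
      by rewrite ltr_pM2l.
    lia.
  have h4 := step L.
  have h5 := hM j.
  have h6 : (k + 1) ^+ L * M <= k ^+ L * k.
    have : (k + 1) ^+ L <= (2 * k) ^+ L.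
      apply: lerXn2r; rewrite ?nnegrE; try lia.
    rewrite exprMn => h; apply: (le_trans (ler_wpM2r (ltW M0) h)).
    have -> : 2 ^+ L * k ^+ L * M = k ^+ L * k by rewrite /k; ring.
    by [].
  have : k ^+ L * k * R < k ^+ L * k * R.
    apply: (lt_le_trans (y := k ^+ L * op_val r a (j + L)%N)).
      by rewrite -mulrA ltr_pM2l // exprn_gt0.
    apply: (le_trans h4).
    apply: (le_trans (y := (k + 1) ^+ L * (M * R))).
      by apply: ler_wpM2l => //; rewrite exprn_ge0 // addr_ge0 // ltW.
    by rewrite mulrA; apply: ler_wpM2r.
  by rewrite ltxx.
Qed.
Lemma ratio_of (k x y : int) : 0 < k -> (k + 1) * x < k * y ->
  ((k + 1)%:~R / k%:~R : rat) * x%:~R < y%:~R.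
Proof.
move=> k0 h; rewrite mulrAC ltr_pdivrMr ?ltr0z // -!intrM ltr_int; lia.
Qed.

Lemma q_gt1 (k : int) : 0 < k -> 1 < ((k + 1)%:~R / k%:~R : rat).
Proof. move=> k0; rewrite ltr_pdivlMr ?ltr0z // mul1r ltr_int; lia. Qed.

Lemma mono_of (f : nat -> int) (k : int) N : 0 < k ->
  (forall n, (N <= n)%N -> 0 < f n /\ (k + 1) * f n < k * f n.+1) ->
  forall n m, (N <= n)%N -> (n < m)%N -> f n < f m.
Proof.
move=> k0 h n m hn; elim: m => // m IH hm.
have hs : f m < f m.+1.
  have [h1 h2] := h m (leq_trans hn (ltnSE hm)); nia.
case: (ltngtP n m) => [lt|gt|eq].
- exact: lt_trans (IH lt) hs.
- lia.
- by rewrite eq.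
Qed.

Theorem mainTheorem5 (r : nat -> nat) (a : seq int) :
  strictly_incr r -> sparse r ->
  (op_pos r a ->
     (exists q : rat, 1 < q /\
        exists N, forall n, (N <= n)%N ->
          q * (op_val r a n)%:~R < (op_val r a n.+1)%:~R) /\
     (exists N, forall n m, (N <= n)%N -> (n < m)%N ->
          op_val r a n < op_val r a m)) /\
  (op_neg r a ->
     (exists q : rat, 1 < q /\
        exists N, forall n, (N <= n)%N ->
          (op_val r a n.+1)%:~R < q * (op_val r a n)%:~R) /\
     (exists N, forall n m, (N <= n)%N -> (n < m)%N ->
          op_val r a m < op_val r a n)).
Proof.
move=> hr hs; split.
  move=> hp; have [k [k0 [N hN]]] := pos_case r _ hr hs hp; split.
    exists ((k + 1)%:~R / k%:~R); split; first exact: q_gt1.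
    by exists N => n hn; have [_ h] := hN n hn; exact: ratio_of.
  by exists N; exact: mono_of _ _ _ k0 hN.
move=> hn.
pose b := lc (-1) 0 a [::].
have hb : forall n, op_val r b n = - op_val r a n.
  by move=> n; rewrite op_val_lc op_val_nil; ring.
have hp : op_pos r b.
  by case: hn => N hN; exists N => n h; rewrite hb oppr_gt0; exact: hN.
have [k [k0 [N hN]]] := pos_case r _ hr hs hp; split.
  exists ((k + 1)%:~R / k%:~R); split; first exact: q_gt1.
  exists N => n hnn; have [_ h] := hN n hnn.
  have := ratio_of _ _ _ k0 h; rewrite !hb !intrN mulrN ltrN2 //.
exists N => n m h1 h2; have := mono_of _ _ _ k0 hN _ _ h1 h2; rewrite !hb ltrN2 //.
Qed.
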